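(* For $t\ge0$ let $C_t:=\binom{2t}{t}2^t$ and for $t\ge1$ let $D_t:=\sum_{j=0}^{t-1}U(3t,j)-\sum_{j\ge t+1}U(3t,j)$. Then $\displaystyle\lim_{t\to\infty}\frac{D_t}{C_t}=\frac19$.
   Context: For integers $m,j$, $U(m,j):=\binom{m-j}{j}2^j$ if $0\le j$ and $2j\le m$, and $U(m,j):=0$ otherwise. *)

(* Defs.v *)
From HB Require Import structures.
From mathcomp Require Import all_boot all_order all_algebra.
From mathcomp Require Import all_classical all_reals all_analysis.
Set Implicit Arguments. Unset Strict Implicit. Unset Printing Implicit Defensive.
Import Order.TTheory GRing.Theory Num.Theory.

Definition U (m j : nat) : nat := if (2 * j <= m)%N then ('C(m - j, j) * 2 ^ j)%N else 0%N.

Definition Cseq (t : nat) : nat := ('C(2 * t, t) * 2 ^ t)%N.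

(* D_t = sum_{j=0}^{t-1} U(3t,j) - sum_{j >= t+1} U(3t,j).
   U(3t,j) = 0 for j > 3t, so the second (infinite) sum is the finite sum over t+1 <= j <= 3t. *)
Definition Dseq (t : nat) : int :=
  ((\sum_(0 <= j < t) U (3 * t) j)%N)%:Z - ((\sum_(t.+1 <= j < (3 * t).+1) U (3 * t) j)%N)%:Z.

(* Main.v *)
Require Import Defs.
From HB Require Import structures.
From mathcomp Require Import all_boot all_order all_algebra.
From mathcomp Require Import all_classical all_reals all_analysis.
From mathcomp Require Import zify.
Import Order.TTheory GRing.Theory Num.Theory.
Import numFieldNormedType.Exports.

Lemma Ualt m j : U m j = 'C(m - j, j) * 2 ^ j.
Proof.
rewrite /U; case: leqP => // h.
rewrite bin_small ?mul0n //; lia.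
Qed.

Lemma Upascal m j : U m.+2 j.+1 = U m.+1 j.+1 + 2 * U m j.
Proof.
rewrite !Ualt !subSS.
case: (leqP j m) => h.
  rewrite subSn // binS expnS; nia.
have -> : m - j = 0 by lia.
have -> : m.+1 - j = 0 by lia.
rewrite !bin0n; case: j h => //.
Qed.

Lemma U0 m : U m 0 = 1.
Proof. by rewrite Ualt bin0. Qed.

Definition A m k := (\sum_(0 <= j < k) U m j)%N.

Lemma AS m k : A m k.+1 = A m k + U m k.
Proof. by rewrite /A big_nat_recr. Qed.

Lemma Apascal m k : A m.+2 k.+1 = A m.+1 k.+1 + 2 * A m k.
Proof.
rewrite /A !big_nat_recl // !U0.
rewrite (eq_bigr (fun i => U m.+1 i.+1 + 2 * U m i)); last by move=> i _; rewrite Upascal.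
rewrite big_split /= -big_distrr /=; lia.
Qed.

Lemma Uzero m j : m < j -> U m j = 0.
Proof. by move=> h; rewrite Ualt bin_small ?mul0n //; lia. Qed.

Definition T m := A m m.+1.

Lemma Afull m n : A m (m.+1 + n) = T m.
Proof.
elim: n => [|n IH]; first by rewrite addn0.
by rewrite addnS AS IH Uzero ?addn0 //; lia.
Qed.

Lemma Trec m : T m.+2 = T m.+1 + 2 * T m.
Proof.
rewrite {1}/T Apascal.
have := Afull m.+1 1; have := Afull m 1; rewrite !addn1 => -> ->; by [].
Qed.

Lemma Tsum m : T m.+1 + T m = 2 ^ m.+1.
Proof.
elim: m => [|m IH].
  rewrite /T /A !big_nat_recr //= !big_geq // !Ualt.
by rewrite Trec expnS -IH; lia.
Qed.

Lemma Usym t : U (3 * t).+2 t.+1 = 2 * U (3 * t).+1 t.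
Proof.
rewrite !Ualt subSS expnS.
have -> : (3 * t).+1 - t = (2 * t).+1 by lia.
rewrite -(bin_sub (n:=(2*t).+1) (m:=t.+1)); last lia.
have -> : (2 * t).+1 - t.+1 = t by lia.
nia.
Qed.

Definition P t := A (3 * t).+1 t.+1 + A (3 * t) t.

Lemma Pval t : P t = 8 ^ t.
Proof.
elim: t => [|t IH].
  by rewrite /P /A big_nat_recr //= !big_geq // U0.
rewrite expnS -IH /P.
have -> : 3 * t.+1 = (3 * t).+3 by lia.
have h1 := Apascal (3*t).+2 t.+1.
have h2 := Apascal (3*t).+1 t.+1.
have h3 := Apascal (3*t).+1 t.
have h4 := AS (3*t).+2 t.+1.
have h5 := AS (3*t).+1 t.
have h6 := Apascal (3*t) t.
have h7 := Usym t.
lia.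
Qed.

Lemma Cform t : Cseq t = U (3 * t) t.
Proof. rewrite Ualt /Cseq; have -> : 3 * t - t = 2 * t by lia. by []. Qed.

Lemma Dform t : Dseq t = (Posz (A (3 * t) t) + Posz (A (3 * t) t.+1) - Posz (T (3 * t)))%R.
Proof.
rewrite /Dseq /T /A (@big_cat_nat _ _ _ t.+1 0 (3*t).+1) //=; last lia.
rewrite PoszD; lia.
Qed.

Lemma Drec t : (Dseq t.+1 + Dseq t)%R = (Posz (Cseq t)).
Proof.
rewrite !Dform Cform.
have -> : 3 * t.+1 = (3 * t).+3 by lia.
have h1 := Apascal (3*t).+1 t.+1.
have h3 := Apascal (3*t).+1 t.
have h4 := AS (3*t).+2 t.+1.
have h5 := AS (3*t).+1 t.
have h6 := Apascal (3*t) t.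
have h7 := Usym t.
have h8 := AS (3*t) t.
have hP := Pval t.
have t1 := Tsum (3*t).+2.
have t2 := Tsum (3*t).+1.
have t3 := Tsum (3*t).
rewrite /P in hP.
have e : 8 ^ t = 2 ^ (3 * t) by rewrite expnM.
rewrite e in hP.
have e1 : 2 ^ (3 * t).+3 = 8 * 2 ^ (3 * t) by rewrite !expnS; lia.
have e2 : 2 ^ (3 * t).+2 = 4 * 2 ^ (3 * t) by rewrite !expnS; lia.
have e3 : 2 ^ (3 * t).+1 = 2 * 2 ^ (3 * t) by rewrite !expnS; lia.
rewrite e1 in t1; rewrite e2 in t2; rewrite e3 in t3.
lia.
Qed.

Lemma Cbin t : t.+1 * 'C((2*t).+2, t.+1) = 2 * (2*t).+1 * 'C(2*t, t).
Proof.
have h1 := mul_bin_diag (2*t).+2 t; rewrite /= in h1.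
have h2 := mul_bin_diag (2*t).+1 t; rewrite /= in h2.
have h3 : 'C((2*t).+1, t.+1) = 'C((2*t).+1, t).
  rewrite -[in RHS](bin_sub (n:=(2*t).+1) (m:=t)); last lia.
  by have -> : (2*t).+1 - t = t.+1 by lia.
rewrite h3 in h2.
apply/eqP; rewrite -(eqn_pmul2l (ltn0Sn t)); apply/eqP.
rewrite -h1; nia.
Qed.

Lemma Crec t : t.+1 * Cseq t.+1 = 4 * (2*t).+1 * Cseq t.
Proof.
rewrite /Cseq.
have -> : 2 * t.+1 = (2*t).+2 by lia.
rewrite expnS mulnA Cbin; nia.
Qed.

Lemma Cpos t : 0 < Cseq t.
Proof. by rewrite /Cseq muln_gt0 bin_gt0 expn_gt0; apply/andP; split => //; lia. Qed.

Lemma D0 : Dseq 0 = 0%R.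
Proof. by rewrite /Dseq !big_geq. Qed.

From mathcomp Require Import ring lra.
Local Open Scope ring_scope.

Lemma nra_step (R : realType) (x r r' : R) : 0 <= x ->
  -1 <= (x + 1) * (r - 9^-1) <= 1 ->
  4 * (2 * x + 1) * r' = (x + 1) * (1 - r) ->
  -1 <= (x + 2) * (r' - 9^-1) <= 1.
Proof.
move=> hx /andP[h1 h2] hk.
have hpos : 0 < 4 * (2 * x + 1) by lra.
have P1 : 0 <= (x + 2) * (1 + (x + 1) * (r - 9^-1)) by apply: mulr_ge0; lra.
have P2 : 0 <= (x + 2) * (1 - (x + 1) * (r - 9^-1)) by apply: mulr_ge0; lra.
have E : 4 * (2 * x + 1) * ((x + 2) * (r' - 9^-1)) =
   (x + 2) * (4 * (2 * x + 1) * r') - (x + 2) * (4 * (2 * x + 1)) / 9 by field.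
rewrite hk in E.
apply/andP; split.
  rewrite -(ler_pM2l hpos) E; lra.
rewrite -(ler_pM2l hpos) E; lra.
Qed.

Lemma bound (R : realType) t :
  -1 <= (t.+1)%:R * ((Dseq t)%:~R / (Cseq t)%:R - 9^-1 : R) <= 1.
Proof.
elim: t => [|t IH].
  rewrite D0 mul0r; lra.
have cp : 0 < (Cseq t)%:R :> R by rewrite ltr0n Cpos.
have cp' : 0 < (Cseq t.+1)%:R :> R by rewrite ltr0n Cpos.
have dr : (Dseq t.+1)%:~R = (Cseq t)%:R - (Dseq t)%:~R :> R.
  have h : (Dseq t.+1)%:~R + (Dseq t)%:~R = (Cseq t)%:R :> R.
    by rewrite -rmorphD /= Drec.
  lra.
have cr : (t.+1)%:R * (Cseq t.+1)%:R = 4 * (2 * t%:R + 1) * (Cseq t)%:R :> R.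
  have := congr1 (fun z : nat => z%:R : R) (Crec t).
  rewrite /= !natrM => ->; congr (_ * _ * _); by rewrite -natr1 natrM.
have -> : (t.+2)%:R = t%:R + 2 :> R by rewrite -addn2 natrD.
apply: (@nra_step R t%:R ((Dseq t)%:~R / (Cseq t)%:R)).
- by rewrite ler0n.
- by rewrite natr1.
have n1 : (t.+1)%:R != 0 :> R by rewrite pnatr_eq0.
have cr' : (Cseq t.+1)%:R = 4 * (2 * t%:R + 1) * (Cseq t)%:R / (t.+1)%:R :> R.
  by rewrite -cr [_ * _]mulrC mulKf.
have n2 : 2 * t%:R + 1 != 0 :> R by rewrite gt_eqF //; apply: ltr_pwDr => //; rewrite mulr_ge0 // ler0n.
rewrite dr cr' -natr1.
rewrite -natr1 in n1.
field.
by rewrite gt_eqF // n2 addrC n1.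
Qed.

Lemma bound2 (R : realType) t :
  9^-1 - harmonic t <= ((Dseq t)%:~R / (Cseq t)%:R : R) <= 9^-1 + harmonic t.
Proof.
have /andP[h1 h2] := bound R t.
set e := (Dseq t)%:~R / (Cseq t)%:R - 9^-1 in h1 h2.
have hr : (Dseq t)%:~R / (Cseq t)%:R = 9^-1 + e :> R by rewrite /e addrC subrK.
rewrite hr /=.
have n1 : (t.+1)%:R != 0 :> R by rewrite pnatr_eq0.
have yp : 0 < ((t.+1)%:R : R)^-1 by rewrite invr_gt0 ltr0n.
have he : e = ((t.+1)%:R)^-1 * ((t.+1)%:R * e) by rewrite mulKf.
set y := ((t.+1)%:R : R)^-1 in yp he *.
set w := (t.+1)%:R * e in h1 h2 he.
have P1 : 0 <= y * (1 - w) by apply: mulr_ge0; lra.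
have P2 : 0 <= y * (1 + w) by apply: mulr_ge0; lra.
rewrite he; apply/andP; split; lra.
Qed.

Local Open Scope classical_set_scope.
Theorem mainTheorem15 (R : realType) :
  (fun t : nat => (Dseq t)%:~R / (Cseq t)%:R : R) @ \oo --> ((9%:R)^-1 : R).
Proof.
apply: (@squeeze_cvgr _ _ _ _ (fun t => 9^-1 - harmonic t) (fun t => 9^-1 + harmonic t)).
- by apply: nearW => t; apply: bound2.
- rewrite -[X in _ --> X](subr0 9^-1); apply: cvgB; [exact: cvg_cst | exact: cvg_harmonic].
- rewrite -[X in _ --> X](addr0 9^-1); apply: cvgD; [exact: cvg_cst | exact: cvg_harmonic].
Qed.
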